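(* Let $X$ be a standard one-dimensional Brownian motion starting at $0$, $p$ the atomic proposition with $X(\omega),t\models_n p$ iff $X_t(\omega)\geq1$, and $\phi_1:=\Box_{(1,2)}(\Diamond_{(1,4)}p\wedge\lnot\Diamond_{(1,3)}p)$. Let $n\geq2$, $\tau^{(n)}_p(\omega):=\inf\{t\in\mathbb{N}/n : X(\omega),t\models_n p\}$, and suppose $\tau^{(n)}_p(\omega)\geq6$. Then $X(\omega),t\not\models_n\phi_1$ for $t=0,1/n,\dots,\tau^{(n)}_p(\omega)-5-1/n$; $X(\omega),t\models_n\phi_1$ for $t=\tau^{(n)}_p(\omega)-5,\ \tau^{(n)}_p(\omega)-5+1/n$; $X(\omega),t\not\models_n\phi_1$ for $t=\tau^{(n)}_p(\omega)-5+2/n,\dots,\tau^{(n)}_p(\omega)-2-2/n$.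
   Context: $\mathbb{N}/n:=\{k/n : k\in\mathbb{N}\}$. Discrete semantics at $t\in\mathbb{N}/n$: $\lnot,\wedge$ classical; $X(\omega),t\models_n\Diamond_I\phi$ iff $\exists s\in I\cap\mathbb{N}/n$ with $X(\omega),t+s\models_n\phi$; $X(\omega),t\models_n\Box_I\phi$ iff $\forall s\in I\cap\mathbb{N}/n$, $X(\omega),t+s\models_n\phi$. *)

(* Defs.v *)
From HB Require Import structures.
From mathcomp Require Import all_boot all_order all_algebra.
From mathcomp Require Import all_classical all_reals all_analysis.
Set Implicit Arguments. Unset Strict Implicit. Unset Printing Implicit Defensive.
Import Order.TTheory GRing.Theory Num.Theory.
Import numFieldNormedType.Exports.
Local Open Scope classical_set_scope.
Local Open Scope ring_scope.

Definition std_brownian_motion {d} {T : measurableType d} {R : realType}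
    (P : probability T R) (X : R -> T -> R) : Prop :=
  [/\ (forall t, 0 <= t -> measurable_fun setT (X t)),
      (forall w, X 0 w = 0),
      (forall w, {within `[0, +oo[, continuous (fun t => X t w)}),
      (forall s t, 0 <= s -> s < t -> forall B : set R, measurable B ->
         P ((fun w => X t w - X s w) @^-1` B) = normal_prob 0 (Num.sqrt (t - s)) B) &
      (forall (m : nat) (ts : nat -> R), 0 <= ts 0%N -> (forall i, ts i < ts i.+1) ->
       forall B : nat -> set R, (forall i, measurable (B i)) ->
       let A i := (fun w => X (ts i.+1) w - X (ts i) w) @^-1` B i in
       P (\bigcap_(i in `I_m) A i) = (\prod_(i < m) P (A i))%E)].

Inductive formula (R : realType) : Type :=
  | FAtom of (R -> Prop)
  | FNot of formula R
  | FAnd of formula R & formula R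
  | FDia of interval R & formula R
  | FBox of interval R & formula R.

Fixpoint sat_n {R : realType} (n : nat) (x : R -> R) (t : R) (phi : formula R)
    : Prop :=
  match phi with
  | FAtom p => p (x t)
  | FNot f => ~ sat_n n x t f
  | FAnd f g => sat_n n x t f /\ sat_n n x t g
  | FDia J f => exists k : nat, (k%:R / n%:R \in J) /\ sat_n n x (t + k%:R / n%:R) f
  | FBox J f => forall k : nat, (k%:R / n%:R \in J) -> sat_n n x (t + k%:R / n%:R) f
  end.

Definition atom_p {R : realType} : formula R := FAtom (fun v : R => 1 <= v).

Definition phi1 {R : realType} : formula R :=
  FBox `]1, 2[%R (FAnd (FDia `]1, 4[%R atom_p) (FNot (FDia `]1, 3[%R atom_p))).

Definition tau_n {R : realType} (n : nat) (x : R -> R) : R :=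
  inf [set t : R | exists k : nat, t = k%:R / n%:R /\ sat_n n x t atom_p].

(* Main.v *)
Require Import Defs.
From HB Require Import structures.
From mathcomp Require Import all_boot all_order all_algebra.
From mathcomp Require Import all_classical all_reals all_analysis.
From mathcomp Require Import zify lra.
Import Order.TTheory GRing.Theory Num.Theory.
Local Open Scope classical_set_scope.
Local Open Scope ring_scope.

Section G.
Variables (R : realType) (n : nat).
Hypothesis n0 : (0 < n)%N.
Definition g (m : nat) : R := m%:R / n%:R.
Lemma npos : 0 < n%:R :> R. Proof. by rewrite ltr0n. Qed.
Lemma g_lt a b : (g a < g b) = (a < b)%N.
Proof. by rewrite /g ltr_pM2r ?invr_gt0 ?npos // ltr_nat. Qed.
Lemma g_le a b : (g a <= g b) = (a <= b)%N.
Proof. by rewrite /g ler_pM2r ?invr_gt0 ?npos // ler_nat. Qed.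
Lemma gD a b : g a + g b = g (a + b).
Proof. by rewrite /g natrD mulrDl. Qed.
Lemma gB a b : (b <= a)%N -> g a - g b = g (a - b).
Proof. by move=> h; rewrite /g natrB // mulrBl. Qed.
Lemma gc c : c%:R = g (c * n).
Proof. by rewrite /g natrM mulfK // gt_eqF ?npos. Qed.
Lemma g1 : 1 = g n.
Proof. by rewrite /g divff // gt_eqF ?npos. Qed.
End G.

Lemma tau_char (R : realType) (n : nat) (x : R -> R) : (0 < n)%N ->
  6 <= tau_n n x ->
  exists K : nat, [/\ tau_n n x = g R n K, 1 <= x (g R n K),
     (6 * n <= K)%N & forall m, (m < K)%N -> ~ 1 <= x (g R n m)].
Proof.
move=> n0 h6.
set E := [set t : R | exists k : nat, t = k%:R / n%:R /\ sat_n n x t atom_p].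
have ne : exists k, 1 <= x (g R n k).
  apply: contrapT => nex.
  have : E = set0.
    apply/seteqP; split => // t [k [-> hk]]; apply: nex; by exists k.
  move=> E0; move: h6; rewrite /tau_n -/E E0 inf0; lra.
pose P := fun k => `[< 1 <= x (g R n k) >].
have exP : exists k, P k by case: ne => k hk; exists k; apply/asboolP.
pose K := ex_minn exP.
have hlb : lbound E 0.
  by move=> t [k [-> _]]; rewrite divr_ge0.
have hinf : tau_n n x = g R n K.
  apply/eqP; rewrite eq_le; apply/andP; split.
    apply: ge_inf; first by exists 0.
    exists K; split => //=. rewrite /K; case: ex_minnP => m /asboolP //.
  apply: lb_le_inf; first by exists (g R n K), K; split => //=; rewrite /K; case: ex_minnP => m /asboolP.
  move=> t [k [-> hk]]; rewrite -/(g R n k) g_le //.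
  rewrite /K; case: ex_minnP => m _ hm; apply: hm; exact/asboolP.
exists K; split => //.
- rewrite /K; case: ex_minnP => m /asboolP //.
- by rewrite -(@g_le R n n0) -(@gc R n n0) -hinf.
- move=> m hm hx.
  move: hm; rewrite /K; case: ex_minnP => m' _ hm'.
  have := hm' m (asboolT hx); lia.
Qed.

Lemma g1n (R : realType) n : 1 / n%:R = g R n 1.
Proof. by rewrite /g. Qed.
Lemma g2n (R : realType) n : 2 / n%:R = g R n 2.
Proof. by rewrite /g. Qed.

Lemma itvg (R : realType) n a b k : (0 < n)%N ->
  (g R n k \in `]a%:R, b%:R[) = (a * n < k < b * n)%N.
Proof. by move=> n0; rewrite in_itv /= (@gc R n n0 a) (@gc R n n0 b) !(@g_lt R n n0). Qed.

Lemma sat_phi1 (R : realType) n (x : R -> R) t0 : (0 < n)%N ->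
  sat_n n x (g R n t0) phi1 <-> forall k, (n < k < 2 * n)%N ->
   (exists j, (n < j < 4 * n)%N /\ 1 <= x (g R n (t0 + k + j))) /\
   ~ (exists j, (n < j < 3 * n)%N /\ 1 <= x (g R n (t0 + k + j))).
Proof.
move=> n0 /=.
have E1 : (1 : R) = 1%:R by [].
have E : forall a b, (a * n < b)%N = (n * a < b)%N by move=> a b; rewrite mulnC.
rewrite E1; split.
- move=> h k hk; have := h k; rewrite -/(g R n k) itvg // mul1n hk => /(_ isT).
  move=> [[j [hj hx]] hn]; split.
    exists j; split; first by move: hj; rewrite -/(g R n j) itvg // mul1n.
    by rewrite -!gD.
  move=> [j2 [hj2 hx2]]; apply: hn; exists j2; split.
    by rewrite -/(g R n j2) itvg // mul1n.
  by rewrite !gD.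
- move=> h k; rewrite -/(g R n k) itvg // mul1n => /h [[j [hj hx]] hn]; split.
    exists j; split; first by rewrite -/(g R n j) itvg // mul1n.
    by rewrite !gD.
  move=> [j2 [hj2 hx2]]; apply: hn; exists j2; split.
    by move: hj2; rewrite -/(g R n j2) itvg // mul1n.
  by rewrite -!gD.
Qed.

Theorem lemma5p4 (d : measure_display) (T : measurableType d) (R : realType)
    (P : probability T R) (X : R -> T -> R) (n : nat) (w : T) :
  std_brownian_motion P X ->
  (2 <= n)%N ->
  6 <= tau_n n (fun t => X t w) ->
  let tau := tau_n n (fun t => X t w) in
  [/\ (forall k : nat, k%:R / n%:R <= tau - 5 - 1 / n%:R ->
         ~ sat_n n (fun t => X t w) (k%:R / n%:R) phi1),
      sat_n n (fun t => X t w) (tau - 5) phi1,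
      sat_n n (fun t => X t w) (tau - 5 + 1 / n%:R) phi1 &
      (forall k : nat, tau - 5 + 2 / n%:R <= k%:R / n%:R <= tau - 2 - 2 / n%:R ->
         ~ sat_n n (fun t => X t w) (k%:R / n%:R) phi1)].
Proof.
move=> _ hn h6 tau.
have n0 : (0 < n)%N by lia.
have [K [hK hp hK6 hmin]] := @tau_char R n (fun t => X t w) n0 h6.
rewrite /tau hK g1n g2n (@gc R n n0 5) (@gc R n n0 2).
rewrite (@gB R n K) ?leq_mul2r; last lia.
split.
- move=> k0; rewrite -/(g R n k0) (@gB R n); last lia.
  rewrite (@g_le R n n0) => hk0 /(@sat_phi1 R n _ _ n0) /(_ n.+1).
  have -> : (n < n.+1 < 2 * n)%N by lia.
  move=> /(_ isT) [[j [hj hx]] _].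
  by apply: (hmin _ _ hx); lia.
- apply/(@sat_phi1 R n _ _ n0) => k hk; split.
    exists (5 * n - k)%N; split; first lia.
    by have -> : (K - 5 * n + k + (5 * n - k) = K)%N by lia.
  move=> [j [hj hx]]; apply: (hmin _ _ hx); lia.
- rewrite (@gD R n). apply/(@sat_phi1 R n _ _ n0) => k hk; split.
    exists (5 * n - 1 - k)%N; split; first lia.
    by have -> : (K - 5 * n + 1 + k + (5 * n - 1 - k) = K)%N by lia.
  move=> [j [hj hx]]; apply: (hmin _ _ hx); lia.
- move=> k0; rewrite -/(g R n k0) (@gB R n K); last lia.
  rewrite (@gB R n); last lia.
  rewrite (@gD R n) !(@g_le R n n0) => /andP [h1 h2] /(@sat_phi1 R n _ _ n0).
  move=> /(_ (maxn n.+1 (K - k0 - 3 * n + 1))).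
  have -> : (n < maxn n.+1 (K - k0 - 3 * n + 1) < 2 * n)%N by lia.
  move=> /(_ isT) [_]; apply.
  exists (K - k0 - maxn n.+1 (K - k0 - 3 * n + 1))%N; split; first lia.
  by have -> : (k0 + maxn n.+1 (K - k0 - 3 * n + 1) + (K - k0 - maxn n.+1 (K - k0 - 3 * n + 1)) = K)%N by lia.
Qed.
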